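(* Let $n\ge r\ge 1$ be integers and let $\overline{X}\in\mathcal{S}_{+}^{n,r}:=\mathbb{R}_{+}^{n\times r}\cap{\rm St}(n,r)$. Suppose that, in the case $n>r>1$, $\overline{X}$ has no zero rows. Define \[ \kappa:=\begin{cases}2.1\sqrt{n}&\text{if } n=r,\\ 1&\text{if } n>r=1,\\ \dfrac{2.1\sqrt{r}\,[1+3r(n-r)]}{\overline{X}_{i^*j^*}}&\text{if } n>r>1,\end{cases} \] where $\overline{X}_{i^*j^*}$ is the smallest nonzero entry of $\overline{X}$. Then there exists $\delta>0$ such that for all $X\in\mathbb{R}^{n\times r}$ with $\|X-\overline{X}\|_F\le\delta$, \[ {\rm dist}(X,\mathcal{S}_{+}^{n,r})\le(\kappa+1)\big[{\rm dist}(X,\mathbb{R}_{+}^{n\times r})+{\rm dist}(X,{\rm St}(n,r))\big]. \]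
   Context: ${\rm St}(n,r):=\{X\in\mathbb{R}^{n\times r}: X^\top X=I_r\}$ is the Stiefel manifold, $\mathbb{R}_{+}^{n\times r}$ is the cone of entrywise nonnegative $n\times r$ matrices, and $\mathcal{S}_{+}^{n,r}:=\mathbb{R}_{+}^{n\times r}\cap{\rm St}(n,r)$. For a closed set $\Omega\subset\mathbb{R}^{n\times r}$, ${\rm dist}(X,\Omega)=\inf_{Z\in\Omega}\|X-Z\|_F$, with $\|\cdot\|_F$ the Frobenius norm. *)

(* Defs.v *)
From HB Require Import structures.
From mathcomp Require Import all_boot all_order all_algebra.
From mathcomp Require Import all_classical all_reals.
Set Implicit Arguments. Unset Strict Implicit. Unset Printing Implicit Defensive.
Import Order.TTheory GRing.Theory Num.Theory.
Local Open Scope ring_scope.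
Local Open Scope classical_set_scope.

Definition frob (R : realType) (n r : nat) (A : 'M[R]_(n, r)) : R :=
  Num.sqrt (\sum_(i < n) \sum_(j < r) (A i j) ^+ 2).

Definition dist (R : realType) (n r : nat) (X : 'M[R]_(n, r))
    (Omega : set 'M[R]_(n, r)) : R :=
  inf [set frob (X - Z) | Z in Omega].

Definition stiefel (R : realType) (n r : nat) : set 'M[R]_(n, r) :=
  [set X | X^T *m X = 1%:M].

Definition nonneg_mx (R : realType) (n r : nat) : set 'M[R]_(n, r) :=
  [set X | forall i j, 0 <= X i j].

Definition nonneg_stiefel (R : realType) (n r : nat) : set 'M[R]_(n, r) :=
  @nonneg_mx R n r `&` @stiefel R n r.

Definition min_nonzero_entry (R : realType) (n r : nat) (X : 'M[R]_(n, r)) : R :=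
  inf [set x : R | exists (i : 'I_n) (j : 'I_r), X i j != 0 /\ x = X i j].

Definition kappa (R : realType) (n r : nat) (Xb : 'M[R]_(n, r)) : R :=
  if n == r then (21%:R / 10%:R) * Num.sqrt (n%:R)
  else if r == 1%N then 1
  else (21%:R / 10%:R) * Num.sqrt (r%:R) * (1 + 3%:R * r%:R * (n - r)%:R)
       / min_nonzero_entry Xb.

(* Main.v *)
Require Import Defs.
From HB Require Import structures.
From mathcomp Require Import all_boot all_order all_algebra.
From mathcomp Require Import all_classical all_reals.
From mathcomp Require Import ring lra.
Import Order.TTheory GRing.Theory Num.Theory.
Local Open Scope ring_scope.

Section Gen.
Variable R : realType.
Implicit Types (x y : R).

Lemma sqrt_le_of x y : 0 <= y -> x <= y ^+ 2 -> Num.sqrt x <= y.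
Proof.
move=> y0 h; case: (leP 0 x) => x0.
  by rewrite -(ger0_norm y0) -sqrtr_sqr ler_sqrt // sqr_ge0.
by rewrite ltr0_sqrtr.
Qed.

Lemma le_sqrt_of x y : 0 <= x -> x ^+ 2 <= y -> x <= Num.sqrt y.
Proof.
move=> x0 h; rewrite -(ger0_norm x0) -sqrtr_sqr ler_sqrt //.
exact: le_trans (sqr_ge0 x) h.
Qed.

Variable T : finType.
Implicit Types (P : pred T) (f g : T -> R).

Lemma sum_sq_ge0 P f : 0 <= \sum_(t | P t) f t ^+ 2.
Proof. by apply: sumr_ge0 => t _; rewrite sqr_ge0. Qed.

Lemma cs P f g : (\sum_(t | P t) f t * g t) ^+ 2 <=
  (\sum_(t | P t) f t ^+ 2) * (\sum_(t | P t) g t ^+ 2).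
Proof.
set A := \sum_(t | P t) f t ^+ 2; set B := \sum_(t | P t) g t ^+ 2.
set C := \sum_(t | P t) f t * g t.
have A0 : 0 <= A by exact: sum_sq_ge0.
have [Ae0|Apos] := eqVneq A 0.
  have f0 : forall t, P t -> f t = 0.
    move=> t Pt; apply/eqP; rewrite -sqrf_eq0; apply/eqP.
    by move/eqP: Ae0; rewrite psumr_eq0 => [/allP /(_ t) |t' _]; 
       [rewrite mem_index_enum Pt /= => /(_ isT) /eqP | rewrite sqr_ge0].
  have -> : C = 0 by rewrite /C big1 // => t Pt; rewrite f0 // mul0r.
  by rewrite Ae0 expr0n /= mul0r.
have Agt : 0 < A by rewrite lt_def Apos A0.
have key : 0 <= \sum_(t | P t) (C / A * f t - g t) ^+ 2 by exact: sum_sq_ge0.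
have e : \sum_(t | P t) (C / A * f t - g t) ^+ 2 = (C / A) ^+ 2 * A - 2%:R * (C / A) * C + B.
  rewrite (eq_bigr (fun t => (C / A) ^+ 2 * f t ^+ 2 - (2%:R * (C / A)) * (f t * g t) + g t ^+ 2)); last by move=> t _; ring.
  by rewrite big_split /= sumrB -!mulr_sumr.
rewrite e in key.
have : 0 <= (B * A - C ^+ 2) / A.
  suff -> : (B * A - C ^+ 2) / A = (C / A) ^+ 2 * A - 2%:R * (C / A) * C + B by [].
  by field; rewrite Apos.
move=> h; have : 0 <= (B * A - C ^+ 2) / A * A by rewrite mulr_ge0 // ltW.
by rewrite divfK ?Apos // subr_ge0 mulrC.
Qed.

Lemma mink P f g : Num.sqrt (\sum_(t | P t) (f t + g t) ^+ 2) <=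
  Num.sqrt (\sum_(t | P t) f t ^+ 2) + Num.sqrt (\sum_(t | P t) g t ^+ 2).
Proof.
set A := \sum_(t | P t) f t ^+ 2; set B := \sum_(t | P t) g t ^+ 2.
set C := \sum_(t | P t) f t * g t.
have A0 : 0 <= A by exact: sum_sq_ge0. have B0 : 0 <= B by exact: sum_sq_ge0.
apply: sqrt_le_of; first by rewrite addr_ge0 ?sqrtr_ge0.
have -> : \sum_(t | P t) (f t + g t) ^+ 2 = A + 2%:R * C + B.
  rewrite (eq_bigr (fun t => f t ^+ 2 + 2%:R * (f t * g t) + g t ^+ 2)); last by move=> t _; ring.
  by rewrite !big_split /= -mulr_sumr.
have hC : C <= Num.sqrt A * Num.sqrt B.
  rewrite -sqrtrM //; apply: le_trans (ler_norm C) _.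
  by rewrite -sqrtr_sqr ler_sqrt ?mulr_ge0 // cs.
have -> : (Num.sqrt A + Num.sqrt B) ^+ 2 = Num.sqrt A ^+ 2 + 2%:R * (Num.sqrt A * Num.sqrt B) + Num.sqrt B ^+ 2 by ring.
rewrite !sqr_sqrtr //.
by rewrite lerD2r lerD2l ler_pM2l.
Qed.

Lemma rmink P f g : Num.sqrt (\sum_(t | P t) f t ^+ 2) - Num.sqrt (\sum_(t | P t) g t ^+ 2) <=
  Num.sqrt (\sum_(t | P t) (f t - g t) ^+ 2).
Proof.
rewrite lerBlDr; apply: le_trans (mink P (fun t => f t - g t) g).
by rewrite le_eqVlt; apply/orP; left; apply/eqP; congr Num.sqrt; apply: eq_bigr => t _; rewrite subrK.
Qed.

Lemma sumsq_le P f : (forall t, P t -> 0 <= f t) ->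
  \sum_(t | P t) f t ^+ 2 <= (\sum_(t | P t) f t) ^+ 2.
Proof.
move=> f0; rewrite expr2 mulr_suml; apply: ler_sum => t Pt.
rewrite expr2 ler_wpM2l ?f0 //.
by rewrite (bigD1 t) //= lerDl sumr_ge0 // => u /andP[Pu _]; rewrite f0.
Qed.

Lemma sum_sub_le P Q f : (forall t, P t -> 0 <= f t) ->
  \sum_(t | P t && Q t) f t <= \sum_(t | P t) f t.
Proof.
move=> f0; rewrite [X in _ <= X](bigID Q) /= lerDl sumr_ge0 // => t /andP[Pt _].
exact: f0.
Qed.
End Gen.

Section Mx.
Variable R : realType.
Variables n r : nat.
Implicit Types (A B : 'M[R]_(n, r)).

Lemma frob_pair A : frob A = Num.sqrt (\sum_(p : 'I_n * 'I_r) A p.1 p.2 ^+ 2).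
Proof. by rewrite /frob pair_bigA. Qed.

Lemma frob_ge0 A : 0 <= frob A.
Proof. exact: sqrtr_ge0. Qed.

Lemma frob_sq A : frob A ^+ 2 = \sum_i \sum_j A i j ^+ 2.
Proof. by rewrite sqr_sqrtr // sumr_ge0 // => i _; exact: sum_sq_ge0. Qed.

Lemma frobD A B : frob (A + B) <= frob A + frob B.
Proof.
rewrite !frob_pair.
have e : \sum_(p : 'I_n * 'I_r) (A + B) p.1 p.2 ^+ 2 = \sum_(p : 'I_n * 'I_r) (A p.1 p.2 + B p.1 p.2) ^+ 2.
  by apply: eq_bigr => p _; rewrite mxE.
rewrite e; exact: (@mink R _ predT (fun p : 'I_n * 'I_r => A p.1 p.2) (fun p => B p.1 p.2)).
Qed.

Lemma frob_le A B : (forall i j, A i j ^+ 2 <= B i j ^+ 2) -> frob A <= frob B.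
Proof.
move=> h; rewrite ler_sqrt; last by rewrite sumr_ge0 // => i _; exact: sum_sq_ge0.
by apply: ler_sum => i _; apply: ler_sum => j _.
Qed.

Lemma frobN A : frob (- A) = frob A.
Proof.
by rewrite /frob; congr Num.sqrt; apply: eq_bigr => i _; apply: eq_bigr => j _; rewrite mxE sqrrN.
Qed.

Lemma frobB_sym A B : frob (A - B) = frob (B - A).
Proof. by rewrite -frobN opprB. Qed.

Lemma frob_entry A i j : `|A i j| <= frob A.
Proof.
rewrite -sqrtr_sqr ler_sqrt; last by rewrite sumr_ge0 // => i' _; exact: sum_sq_ge0.
rewrite (bigD1 i) //= (bigD1 j) //= -addrA lerDl addr_ge0 //.
  by apply: sum_sq_ge0.
by rewrite sumr_ge0 // => i' _; exact: sum_sq_ge0.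
Qed.

End Mx.

Section Bes.
Variable R : realType.
Variables n r : nat.
Variable P : 'M[R]_(n, r).
Hypothesis PtP : P^T *m P = 1%:M.

Lemma bessel (v : 'I_n -> R) : \sum_j (\sum_i P i j * v i) ^+ 2 <= \sum_i v i ^+ 2.
Proof.
set V : 'cV[R]_n := \col_i v i.
set U := P^T *m V.
set E := V - P *m U.
have hE : E^T *m E = V^T *m V - U^T *m U.
  have eT : E^T = V^T - U^T *m P^T.
    rewrite -trmx_mul; apply/matrixP => i j; by rewrite !mxE.
  rewrite eT /E mulmxBl !mulmxBr.
  have h1 : V^T *m P = U^T by rewrite /U trmx_mul trmxK.
  rewrite !mulmxA h1 -[U^T *m P^T *m P]mulmxA PtP mulmx1.
  rewrite -[U^T *m P^T *m V]mulmxA -/U.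
  by rewrite opprB addrA subrK.
have : 0 <= (E^T *m E) 0 0.
  rewrite mxE; apply: sumr_ge0 => i _; rewrite mxE -expr2; exact: sqr_ge0.
rewrite hE !mxE subr_ge0 => h.
apply: le_trans (le_trans h _).
  rewrite le_eqVlt; apply/orP; left; apply/eqP; apply: eq_bigr => j _.
  rewrite !mxE -expr2; congr (_ ^+ 2); apply: eq_bigr => i _; rewrite !mxE //.
rewrite le_eqVlt; apply/orP; left; apply/eqP; apply: eq_bigr => i _.
by rewrite !mxE -expr2.
Qed.

Lemma frob_PtD (D : 'M[R]_(n, r)) : frob (P^T *m D) <= frob D.
Proof.
rewrite /frob ler_sqrt; last by rewrite sumr_ge0 // => i _; exact: sum_sq_ge0.
rewrite exchange_big [X in _ <= X]exchange_big /=.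
apply: ler_sum => k _.
apply: le_trans (bessel (fun i => D i k)).
rewrite le_eqVlt; apply/orP; left; apply/eqP; apply: eq_bigr => j _.
by rewrite !mxE; congr (_ ^+ 2); apply: eq_bigr => i _; rewrite !mxE.
Qed.
End Bes.

Section Mx2.
Variable R : realType.

Lemma frob_tr n r (A : 'M[R]_(n, r)) : frob (A^T) = frob A.
Proof.
rewrite /frob exchange_big /=; congr Num.sqrt.
by apply: eq_bigr => i _; apply: eq_bigr => j _; rewrite mxE.
Qed.

Lemma frob_DtD n r (D : 'M[R]_(n, r)) : frob (D^T *m D) <= frob D ^+ 2.
Proof.
apply: sqrt_le_of; first exact: sqr_ge0.
have eS : \sum_i \sum_j D i j ^+ 2 = \sum_j \sum_i D i j ^+ 2 by exact: exchange_big.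
rewrite frob_sq /= eS expr2 mulr_suml.
apply: ler_sum => j _; rewrite mulr_sumr; apply: ler_sum => k _.
rewrite !mxE.
have -> : \sum_j0 D^T j j0 * D j0 k = \sum_i D i j * D i k by apply: eq_bigr => i _; rewrite mxE.
exact: cs.
Qed.
End Mx2.

Section Struct.
Variable R : realType.
Variables n r : nat.
Variable Xb : 'M[R]_(n, r).
Hypothesis Xb0 : forall i j, 0 <= Xb i j.
Hypothesis XtX : Xb^T *m Xb = 1%:M.
Hypothesis r0 : (0 < r)%N.

Definition j0 : 'I_r := Ordinal r0.
Definition cc (i : 'I_n) : 'I_r :=
  if [pick j | Xb i j != 0] is Some j then j else j0.

Lemma XtX_entry j k : \sum_i Xb i j * Xb i k = (j == k)%:R.
Proof.
have := congr1 (fun M : 'M[R]_r => M j k) XtX; rewrite !mxE => <-.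
by apply: eq_bigr => i _; rewrite mxE.
Qed.

Lemma orth_row i j k : j != k -> Xb i j * Xb i k = 0.
Proof.
move=> jk; have := XtX_entry j k; rewrite (negbTE jk) => /eqP.
rewrite psumr_eq0 => [/allP /(_ i) |i' _]; last by rewrite mulr_ge0.
by rewrite mem_index_enum => /(_ isT) /eqP.
Qed.

Lemma cc_eq i j : Xb i j != 0 -> cc i = j.
Proof.
move=> nz; rewrite /cc; case: pickP => [k hk|h]; last by rewrite h in nz.
apply/eqP; apply: contraT => kj.
by move: (orth_row i k j kj) => /eqP; rewrite mulf_eq0 (negbTE hk) (negbTE nz).
Qed.

Lemma cc_off i j : cc i != j -> Xb i j = 0.
Proof.
move=> h; apply/eqP; apply: contraT => nz.
by rewrite (cc_eq i j nz) eqxx in h.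
Qed.

Lemma colsum j : \sum_(i | cc i == j) Xb i j ^+ 2 = 1.
Proof.
have := XtX_entry j j; rewrite eqxx (bigID (fun i => cc i == j)) /=.
rewrite [X in _ + X]big1 ?addr0 => [h|i hi]; last by rewrite (cc_off i j hi) mul0r.
transitivity (true%:R : R); last by [].
by rewrite -h; apply: eq_bigr => i _; rewrite expr2.
Qed.


Lemma sum_col_le (A : 'M[R]_(n, r)) (Q : pred 'I_n) j :
  \sum_(i | Q i) A i j ^+ 2 <= frob A ^+ 2.
Proof.
rewrite frob_sq; apply: le_trans (_ : \sum_i A i j ^+ 2 <= _).
  by rewrite [X in _ <= X](bigID Q) /= lerDl sumr_ge0 // => i _; rewrite sqr_ge0.
apply: ler_sum => i _; rewrite (bigD1 j) //= lerDl.
by apply: sumr_ge0 => k _; rewrite sqr_ge0.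
Qed.

Variable X : 'M[R]_(n, r).
Definition W : 'M[R]_(n, r) := \matrix_(i, j) (if 0 <= X i j then X i j else 0).
Definition rho j := Num.sqrt (\sum_(i | cc i == j) W i j ^+ 2).
Definition Y : 'M[R]_(n, r) := \matrix_(i, j) (if cc i == j then W i j / rho j else 0).
Definition nw j := Num.sqrt (\sum_i W i j ^+ 2).
Definition Oj j := \sum_(i | cc i != j) W i j ^+ 2.
Definition O := \sum_j Oj j.

Lemma W_ge0 i j : 0 <= W i j.
Proof. by rewrite mxE; case: ifP. Qed.

Lemma projW1 (Z : 'M[R]_(n, r)) : (forall i j, 0 <= Z i j) ->
  forall i j, (X - W) i j ^+ 2 <= (X - Z) i j ^+ 2.
Proof.
move=> Z0 i j; rewrite !mxE; case: ifP => h; first by rewrite subrr expr0n /= sqr_ge0.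
rewrite subr0 -[X in X <= _]sqrrN -[X in _ <= X]sqrrN.
have hx : X i j < 0 by rewrite ltNge h.
rewrite ler_sqr ?nnegrE; try lra.
  by have := Z0 i j; lra.
by have := Z0 i j; lra.
Qed.

Lemma projW2 (Z : 'M[R]_(n, r)) : (forall i j, 0 <= Z i j) ->
  forall i j, (W - Z) i j ^+ 2 <= (X - Z) i j ^+ 2.
Proof.
move=> Z0 i j; rewrite !mxE; case: ifP => h //.
have hx : X i j < 0 by rewrite ltNge h.
rewrite sub0r sqrrN -[X in _ <= X]sqrrN ler_sqr ?nnegrE; try lra.
  by have := Z0 i j; lra.
by have := Z0 i j; lra.
Qed.

Lemma rho_ge j : 1 - frob (X - Xb) <= rho j.
Proof.
have := @mink R _ (fun i => cc i == j) (fun i => W i j) (fun i => Xb i j - W i j).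
have -> : \sum_(i | cc i == j) (W i j + (Xb i j - W i j)) ^+ 2 = 1.
  by rewrite -(colsum j); apply: eq_bigr => i _; rewrite addrC subrK.
rewrite sqrtr1 -/(rho j) => h.
have h2 : Num.sqrt (\sum_(i | cc i == j) (Xb i j - W i j) ^+ 2) <= frob (X - Xb).
  apply: le_trans (_ : frob (W - Xb) <= _); last first.
    by apply: frob_le => i k; exact: projW2.
  apply: sqrt_le_of; first exact: frob_ge0.
  apply: le_trans (sum_col_le (W - Xb) (fun i => cc i == j) j).
  rewrite le_eqVlt; apply/orP; left; apply/eqP; apply: eq_bigr => i _.
  by rewrite -sqrrN opprB !mxE.
rewrite lerBlDl; apply: le_trans h _; rewrite addrC lerD2r.
exact: h2.
Qed.

Hypothesis rho_pos : forall j, 0 < rho j.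

Lemma Y_ge0 i j : 0 <= Y i j.
Proof.
rewrite mxE; case: ifP => // _; rewrite divr_ge0 ?W_ge0 //; exact: ltW.
Qed.

Lemma Y_st : Y^T *m Y = 1%:M.
Proof.
apply/matrixP => j k; rewrite !mxE.
have [->|jk] := eqVneq j k.
  rewrite (bigID (fun i => cc i == k)) /= [X in _ + X]big1 ?addr0; last first.
    by move=> i /negbTE hi; rewrite !mxE hi mul0r.
  transitivity (\sum_(i | cc i == k) W i k ^+ 2 / rho k ^+ 2).
    by apply: eq_bigr => i /eqP hi; rewrite !mxE hi eqxx; field; rewrite gt_eqF.
  rewrite -mulr_suml -[X in X / _](@sqr_sqrtr R); last by apply: sumr_ge0 => i _; rewrite sqr_ge0.
  by rewrite -/(rho k) divff // expf_neq0 // gt_eqF.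
rewrite big1 // => i _; rewrite !mxE.
case: (eqVneq (cc i) j) => [hj|hj]; case: (eqVneq (cc i) k) => [hk|hk] //; rewrite ?mul0r ?mulr0 //.
by move: jk; rewrite -hj -hk eqxx.
Qed.

Lemma decomp : frob (X - Y) ^+ 2 = frob (X - W) ^+ 2 + frob (W - Y) ^+ 2.
Proof.
rewrite !frob_sq -big_split /=; apply: eq_bigr => i _; rewrite -big_split /=.
apply: eq_bigr => j _; rewrite !mxE.
case: (leP 0 (X i j)) => h; first by rewrite subrr expr0n add0r.
by case: ifP => _; rewrite ?mul0r subr0 ?subrr ?expr0n ?addr0.
Qed.

Lemma wy : frob (W - Y) ^+ 2 = O + \sum_j (rho j - 1) ^+ 2.
Proof.
rewrite frob_sq exchange_big /= /O /Oj -big_split /=; apply: eq_bigr => j _.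
rewrite (bigID (fun i => cc i == j)) /= addrC; congr (_ + _).
  by apply: eq_bigr => i /negbTE hi; rewrite !mxE hi subr0.
have hr : rho j ^+ 2 = \sum_(i | cc i == j) W i j ^+ 2.
  by rewrite sqr_sqrtr // sumr_ge0 // => i _; rewrite sqr_ge0.
transitivity (\sum_(i | cc i == j) W i j ^+ 2 * (1 - (rho j)^-1) ^+ 2).
  by apply: eq_bigr => i /eqP hi; rewrite !mxE hi eqxx; ring.
rewrite -mulr_suml -hr; field; rewrite gt_eqF //.
Qed.

Lemma sqrt_add_le (a b : R) : 0 <= a -> 0 <= b -> Num.sqrt (a + b) <= Num.sqrt a + Num.sqrt b.
Proof.
move=> a0 b0; apply: sqrt_le_of; first by rewrite addr_ge0 ?sqrtr_ge0.
have -> : (Num.sqrt a + Num.sqrt b) ^+ 2 = Num.sqrt a ^+ 2 + Num.sqrt b ^+ 2 + 2%:R * (Num.sqrt a * Num.sqrt b) by ring.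
by rewrite !sqr_sqrtr // lerDl mulr_ge0 // mulr_ge0 // sqrtr_ge0.
Qed.

Lemma O_ge0 : 0 <= O.
Proof. by apply: sumr_ge0 => j _; apply: sumr_ge0 => i _; rewrite sqr_ge0. Qed.

Lemma Oj_ge0 j : 0 <= Oj j.
Proof. by apply: sumr_ge0 => i _; rewrite sqr_ge0. Qed.

Variable P : 'M[R]_(n, r).
Hypothesis PtP : P^T *m P = 1%:M.
Hypothesis rho_half : forall j, 1 / 2%:R <= rho j.

Lemma nw_rho j : 0 <= nw j - rho j <= Oj j.
Proof.
have hs : \sum_i W i j ^+ 2 = rho j ^+ 2 + Oj j.
  rewrite sqr_sqrtr; last by apply: sumr_ge0 => i _; rewrite sqr_ge0.
  by rewrite (bigID (fun i => cc i == j)).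
have hnw : nw j ^+ 2 = rho j ^+ 2 + Oj j.
  by rewrite /nw sqr_sqrtr ?hs // addr_ge0 ?sqr_ge0 ?Oj_ge0.
have hle : rho j <= nw j.
  rewrite ler_sqrt; last by apply: sumr_ge0 => i _; rewrite sqr_ge0.
  by rewrite [X in _ <= X](bigID (fun i => cc i == j)) /= lerDl sumr_ge0 // => i _; rewrite sqr_ge0.
have := rho_half j; have := Oj_ge0 j => h0 h1.
apply/andP; split; first by rewrite subr_ge0.
nra.
Qed.

Lemma nw_one j : (nw j - 1) ^+ 2 <= \sum_i (W - P) i j ^+ 2.
Proof.
have hP : Num.sqrt (\sum_i P i j ^+ 2) = 1.
  have := congr1 (fun M : 'M[R]_r => M j j) PtP; rewrite !mxE eqxx /= => h.
  rewrite -sqrtr1 -[in RHS](_ : \sum_i P^T j i * P i j = 1) //.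
  by congr Num.sqrt; apply: eq_bigr => i _; rewrite mxE expr2.
have h1 := @rmink R _ predT (fun i => W i j) (fun i => P i j).
have h2 := @rmink R _ predT (fun i => P i j) (fun i => W i j).
rewrite hP -/(nw j) in h1 h2.
have e1 : \sum_i (P i j - W i j) ^+ 2 = \sum_i (W - P) i j ^+ 2.
  by apply: eq_bigr => i _; rewrite -sqrrN opprB !mxE.
have e2 : \sum_i (W i j - P i j) ^+ 2 = \sum_i (W - P) i j ^+ 2.
  by apply: eq_bigr => i _; rewrite !mxE.
rewrite e1 in h2; rewrite e2 in h1.
set d := \sum_i (W - P) i j ^+ 2 in h1 h2 *.
have d0 : 0 <= d by apply: sumr_ge0 => i _; rewrite sqr_ge0.
rewrite -(sqr_sqrtr d0).
have := sqrtr_ge0 d; set q := Num.sqrt d in h1 h2 *; move=> q0.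
nra.
Qed.

Lemma wy_bound : frob (W - Y) <= Num.sqrt O + O + frob (W - P).
Proof.
have T0 : 0 <= \sum_j (rho j - 1) ^+ 2 by apply: sumr_ge0 => j _; rewrite sqr_ge0.
have -> : frob (W - Y) = Num.sqrt (O + \sum_j (rho j - 1) ^+ 2).
  by rewrite -wy sqrtr_sqr ger0_norm // frob_ge0.
apply: le_trans (sqrt_add_le _ _ O_ge0 T0) _; rewrite -addrA lerD2l.
have := @mink R _ predT (fun j => rho j - nw j) (fun j => nw j - 1).
have -> : \sum_j (rho j - nw j + (nw j - 1)) ^+ 2 = \sum_j (rho j - 1) ^+ 2.
  by apply: eq_bigr => j _; rewrite addrA subrK.
move=> h; apply: le_trans h _; apply: lerD.
  apply: sqrt_le_of; first exact: O_ge0.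
  apply: le_trans (_ : \sum_j Oj j ^+ 2 <= _); last first.
    by apply: sumsq_le => j _; exact: Oj_ge0.
  apply: ler_sum => j _; have /andP[h1 h2] := nw_rho j.
  rewrite -sqrrN opprB; rewrite ler_sqr ?nnegrE //; exact: Oj_ge0.
rewrite /frob exchange_big /= ler_sqrt; last by apply: sumr_ge0 => j _; apply: sumr_ge0 => i _; rewrite sqr_ge0.
by apply: ler_sum => j _; exact: nw_one.
Qed.

Lemma sum_sub_le1 (T : finType) (Q : pred T) (f : T -> R) : (forall t, 0 <= f t) ->
  \sum_(t | Q t) f t <= \sum_t f t.
Proof.
by move=> f0; rewrite [X in _ <= X](bigID Q) /= lerDl sumr_ge0.
Qed.

Lemma O_bound m' : 0 < m' -> (forall i, m' <= W i (cc i)) ->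
  m' ^+ 2 * O <= frob (W^T *m W - 1%:M) ^+ 2.
Proof.
move=> m0 hm; rewrite frob_sq /O /Oj mulr_sumr; apply: ler_sum => j _.
rewrite mulr_sumr.
apply: le_trans (_ : \sum_(i | cc i != j) (W i j * W i (cc i)) ^+ 2 <= _).
  apply: ler_sum => i _; rewrite exprMn mulrC ler_wpM2l ?sqr_ge0 //.
  by rewrite ler_sqr ?nnegrE ?(ltW m0) ?W_ge0 ?hm.
rewrite (partition_big cc (fun k => k != j)) //=.
rewrite [X in _ <= X](bigD1 j) //= [X in _ <= X]addrC -[X in X <= _]addr0.
apply: lerD; last by rewrite sqr_ge0.
apply: ler_sum => k kj.
have e : forall i, (cc i != j) && (cc i == k) -> (W i j * W i (cc i)) ^+ 2 = (W i j * W i k) ^+ 2.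
  by move=> i /andP[_ /eqP ->].
rewrite (eq_bigr _ e).
apply: le_trans (@sumsq_le R _ _ (fun i => W i j * W i k) _) _; first by move=> i _; rewrite mulr_ge0 ?W_ge0.
have s0 : 0 <= \sum_(i | (cc i != j) && (cc i == k)) W i j * W i k.
  by apply: sumr_ge0 => i _; rewrite mulr_ge0 ?W_ge0.
have kj2 : (j == k) = false by rewrite eq_sym (negbTE kj).
rewrite !mxE kj2 subr0.
have eG : \sum_j1 W^T j j1 * W j1 k = \sum_i W i j * W i k by apply: eq_bigr => i _; rewrite mxE.
rewrite eG ler_sqr ?nnegrE //; last by apply: sumr_ge0 => i _; rewrite mulr_ge0 ?W_ge0.
by apply: (@sum_sub_le1 _ _ (fun i => W i j * W i k)) => i; rewrite mulr_ge0 ?W_ge0.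
Qed.

Lemma G_id (Q D : 'M[R]_(n, r)) : Q^T *m Q = 1%:M ->
  (Q + D)^T *m (Q + D) - 1%:M = Q^T *m D + (Q^T *m D)^T + D^T *m D.
Proof.
move=> QtQ.
have eT : (Q + D)^T = Q^T + D^T by apply/matrixP => i j; rewrite !mxE.
rewrite eT mulmxDl !mulmxDr QtQ trmx_mul trmxK.
by rewrite addrC !addrA addNr add0r.
Qed.

Lemma G_bound : frob (W^T *m W - 1%:M) <= 2%:R * frob (W - P) + frob (W - P) ^+ 2.
Proof.
have eW : W = P + (W - P) by rewrite addrC subrK.
rewrite {1 2}eW G_id //.
apply: le_trans (@frobD R _ _ _ _) _; apply: lerD; last exact: frob_DtD.
apply: le_trans (@frobD R _ _ _ _) _; rewrite frob_tr mulr2n mulrDl mul1r.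
by apply: lerD; exact: (@frob_PtD R n r P PtP _).
Qed.
End Struct.

Arguments W {R n r}. Arguments cc {R n r}. Arguments rho {R n r}. Arguments Y {R n r}.
Arguments O {R n r}. Arguments Oj {R n r}. Arguments nw {R n r}.

Lemma W_geX (R : realType) n r (X : 'M[R]_(n, r)) i j : X i j <= W X i j.
Proof. rewrite mxE; case: ifP => // /negbT; rewrite -ltNge => /ltW //. Qed.

Lemma O_r1 (R : realType) n r (Xb : 'M[R]_(n, r)) r0 X : r = 1%N -> O Xb r0 X = 0.
Proof.
move=> r1; rewrite /O big1 // => j _; rewrite /Oj big_pred0 // => i.
apply/negbTE; rewrite negbK; apply/eqP/val_inj => /=.
have h1 := ltn_ord (cc Xb r0 i); have h2 := ltn_ord j.
move: (nat_of_ord (cc Xb r0 i)) (nat_of_ord j) h1 h2 => a b.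
by rewrite r1 !ltnS !leqn0 => /eqP -> /eqP ->.
Qed.

Arguments rho_ge {R n r Xb} Xb0 XtX r0 X j.
Arguments projW1 {R n r X Z}.
Arguments wy_bound {R n r Xb r0 X} rho_pos {P} PtP rho_half.
Arguments O_bound {R n r} Xb r0 {X m'}.
Arguments G_bound {R n r} X {P} PtP.
Arguments decomp {R n r} Xb r0 X.
Arguments O_ge0 {R n r} Xb r0 X.
Arguments Y_st {R n r Xb r0 X}.
Arguments Y_ge0 {R n r Xb r0 X}.
Arguments O_r1 {R n r}. Arguments W_geX {R n r}.

Lemma sq_le_imp (R : realType) (a b : R) : 0 <= a -> 0 <= b -> a ^+ 2 <= b ^+ 2 -> a <= b.
Proof. by move=> a0 b0; rewrite ler_sqr ?nnegrE. Qed.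

Lemma core (R : realType) n r (Xb : 'M[R]_(n, r)) (Xb0 : forall i j, 0 <= Xb i j)
  (XtX : Xb^T *m Xb = 1%:M) (r0 : (0 < r)%N) (X P : 'M[R]_(n, r))
  (PtP : P^T *m P = 1%:M) (m : R) :
  0 < m -> m <= 1 -> frob (X - Xb) <= m / 100%:R -> frob (X - P) <= m / 100%:R ->
  ((1 < r)%N -> forall i, m <= Xb i (cc Xb r0 i)) ->
  frob (X - Y Xb r0 X) ^+ 2 = frob (X - W X) ^+ 2 + frob (W X - Y Xb r0 X) ^+ 2 /\
  m * frob (W X - Y Xb r0 X) <= 16%:R / 5%:R * (frob (X - W X) + frob (X - P)) /\
  ((r == 1)%N -> frob (W X - Y Xb r0 X) <= frob (X - W X) + frob (X - P)).
Proof.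
move=> m0 m1 hX hP hm.
set e := frob (X - W X); set b := frob (X - P); set q := frob (W X - Y Xb r0 X).
set s := frob (W X - P).
have hd : frob (X - Xb) <= 1 / 100%:R.
  lra.
have hrho : forall j, 99%:R / 100%:R <= rho Xb r0 X j.
  move=> j; apply: le_trans (rho_ge Xb0 XtX r0 X j); lra.
have rp : forall j, 0 < rho Xb r0 X j by move=> j; have := hrho j; lra.
have rh : forall j, 1 / 2%:R <= rho Xb r0 X j by move=> j; have := hrho j; lra.
have eXb : e <= frob (X - Xb) by apply: frob_le; exact: projW1.
have e0 : 0 <= e by exact: frob_ge0.
have b0 : 0 <= b by exact: frob_ge0.
have s0 : 0 <= s by exact: frob_ge0.
have q0 : 0 <= q by exact: frob_ge0.
have hs : s <= e + b.
  rewrite /s; have -> : W X - P = (W X - X) + (X - P) by rewrite addrA subrK.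
  by apply: le_trans (@frobD _ _ _ _ _) _; rewrite frobB_sym.
have hq := wy_bound rp PtP rh.
rewrite -/q -/s in hq.
have hO0 := O_ge0 Xb r0 X.
split; first exact: decomp.
have r1case : (r == 1)%N -> q <= e + b.
  move=> /eqP r1; rewrite (O_r1 Xb r0 X r1) sqrtr0 !add0r in hq.
  exact: le_trans hq hs.
split; last exact: r1case.
have [r1|r2] := eqVneq r 1%N.
  have := r1case (introT eqP r1) => h.
  apply: le_trans (_ : q <= _); first by rewrite -[X in _ <= X]mul1r ler_wpM2r.
  by apply: le_trans h _; lra.
have r2' : (1 < r)%N by rewrite ltn_neqAle eq_sym r2 r0.
set m' := 99%:R / 100%:R * m.
have m'0 : 0 < m' by rewrite /m'; lra.
have hm' : forall i, m' <= W X i (cc Xb r0 i).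
  move=> i; apply: le_trans (W_geX X i (cc Xb r0 i)).
  have := @frob_entry _ _ _ (X - Xb) i (cc Xb r0 i); rewrite !mxE => ha.
  have := hm r2' i => hb.
  have hc := ler_norm (Xb i (cc Xb r0 i) - X i (cc Xb r0 i)).
  rewrite -normrN opprB in hc.
  rewrite /m'; lra.
have hOb := O_bound Xb r0 m'0 hm'.
have hG := G_bound X PtP; rewrite -/s in hG.
have hOs : m' ^+ 2 * O Xb r0 X <= (2%:R * s + s ^+ 2) ^+ 2.
  apply: le_trans hOb _; rewrite ler_sqr ?nnegrE ?frob_ge0 //.
  by rewrite addr_ge0 ?sqr_ge0 // mulr_ge0.
have hb : b <= m / 100%:R := hP.
have sm : s <= m / 50%:R by lra.
set sq := Num.sqrt (O Xb r0 X) in hq *.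
have sq0 : 0 <= sq by exact: sqrtr_ge0.
have sqsq : sq ^+ 2 = O Xb r0 X by rewrite sqr_sqrtr.
set OO := O Xb r0 X in hq hOs sqsq hO0 *.
have h2s : 0 <= 2%:R * s + s ^+ 2 by rewrite addr_ge0 ?sqr_ge0 // mulr_ge0.
have h1 : m' * sq <= 2%:R * s + s ^+ 2.
  apply: sq_le_imp => //; first by rewrite mulr_ge0 // ltW.
  by rewrite exprMn sqsq.
have hss : s ^+ 2 <= s / 50%:R.
  have : s <= 1 / 50%:R by lra.
  nra.
have hmsq : m * sq <= 2041%:R / 1000%:R * s.
  rewrite /m' in h1; lra.
have hms : m * s <= s by nra.
have hsq2 : (2%:R * s + s ^+ 2) ^+ 2 <= 41%:R / 10%:R * (m / 50%:R) * s.
  have h : 2%:R * s + s ^+ 2 <= 202%:R / 100%:R * s by lra.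
  apply: le_trans (_ : (202%:R / 100%:R * s) ^+ 2 <= _).
    by rewrite ler_sqr ?nnegrE //; lra.
  nra.
have hmO : m * OO <= s / 10%:R.
  have hA : 98%:R / 100%:R * (m * (m * OO)) <= m * (41%:R / 500%:R * s).
    have hmm : 0 <= m * (m * OO) by rewrite !mulr_ge0 // ltW.
    rewrite /m' in hOs; nra.
  have hB : 98%:R / 100%:R * (m * OO) <= 41%:R / 500%:R * s.
    rewrite -(ler_pM2l m0); lra.
  have : 0 <= m * OO by rewrite mulr_ge0 // ltW.
  lra.
have hmq : m * q <= m * sq + m * OO + m * s.
  by rewrite -!mulrDr ler_wpM2l // ltW.
lra.
Qed.

Local Open Scope classical_set_scope.

Lemma dist_le (R : realType) n r (X : 'M[R]_(n, r)) (Om : set 'M[R]_(n, r)) Z :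
  Om Z -> dist X Om <= frob (X - Z).
Proof.
move=> hZ; apply: (ge_inf _); last by exists Z.
by exists 0 => y [Z' _ <-]; exact: frob_ge0.
Qed.

Lemma dist_ge (R : realType) n r (X : 'M[R]_(n, r)) (Om : set 'M[R]_(n, r)) x Z0 :
  Om Z0 -> (forall Z, Om Z -> x <= frob (X - Z)) -> x <= dist X Om.
Proof.
move=> h0 h; apply: lb_le_inf; first by exists (frob (X - Z0)); exists Z0.
by move=> y [Z hZ <-]; exact: h.
Qed.

Lemma Y_in (R : realType) n r (Xb : 'M[R]_(n, r)) (Xb0 : forall i j, 0 <= Xb i j)
  (XtX : Xb^T *m Xb = 1%:M) (r0 : (0 < r)%N) (X : 'M[R]_(n, r)) :
  frob (X - Xb) <= 1 / 100%:R -> nonneg_stiefel (Y Xb r0 X).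
Proof.
move=> hd.
have rp : forall j, 0 < rho Xb r0 X j.
  move=> j; have := rho_ge Xb0 XtX r0 X j; lra.
split; [exact: (Y_ge0 rp) | exact: (Y_st rp)].
Qed.

Lemma sq_one (R : realType) n (Xb : 'M[R]_n) (Xb0 : forall i j, 0 <= Xb i j)
  (XtX : Xb^T *m Xb = 1%:M) (r0 : (0 < n)%N) i : Xb i (cc Xb r0 i) = 1.
Proof.
have XXt := mulmx1C XtX.
have := congr1 (fun M : 'M[R]_n => M i i) XXt; rewrite !mxE eqxx /= => h.
rewrite (bigD1 (cc Xb r0 i)) //= big1 ?addr0 in h; last first.
  move=> j hj; rewrite mxE (@cc_off R n n Xb Xb0 XtX r0 i j) ?mul0r //.
  by rewrite eq_sym.
rewrite mxE in h.
have := Xb0 i (cc Xb r0 i); move: h.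
set x := Xb i (cc Xb r0 i) => h x0.
have hx : x * x = 1 by exact: h.
have : (x - 1) * (x + 1) = 0.
  by rewrite (_ : (x - 1) * (x + 1) = x * x - 1); [rewrite hx subrr | ring].
move/eqP; rewrite mulf_eq0 => /orP[/eqP|/eqP]; lra.
Qed.

Lemma mne_props (R : realType) n r (Xb : 'M[R]_(n, r)) (Xb0 : forall i j, 0 <= Xb i j)
  (XtX : Xb^T *m Xb = 1%:M) i0 k0 : Xb i0 k0 != 0 ->
  0 < min_nonzero_entry Xb /\ min_nonzero_entry Xb <= 1 /\
  (forall i j, Xb i j != 0 -> min_nonzero_entry Xb <= Xb i j).
Proof.
move=> nz0.
set S := [set x : R | exists (i : 'I_n) (j : 'I_r), Xb i j != 0 /\ x = Xb i j].
have hlb : has_lbound S by exists 0 => y [i [j [_ ->]]].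
have hle : forall i j, Xb i j != 0 -> min_nonzero_entry Xb <= Xb i j.
  by move=> i j nz; apply: (ge_inf hlb); exists i, j.
have hle1 : forall i j, Xb i j <= 1.
  move=> i j.
  have := congr1 (fun M : 'M[R]_r => M j j) XtX; rewrite !mxE eqxx /= => h.
  have : Xb i j * Xb i j <= 1.
    rewrite -[1]/(true%:R : R) -h (bigD1 i) //= mxE lerDl.
    by apply: sumr_ge0 => k _; rewrite mxE mulr_ge0.
  have := Xb0 i j; nra.
set T := \sum_i \sum_j (if Xb i j != 0 then (Xb i j)^-1 else 0).
have T0 : 0 <= T.
  by apply: sumr_ge0 => i _; apply: sumr_ge0 => j _; case: ifP => // _; rewrite invr_ge0.
have hmu : 1 / (1 + T) <= min_nonzero_entry Xb.
  apply: lb_le_inf; first by exists (Xb i0 k0); exists i0, k0.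
  move=> y [i [j [nz ->]]].
  have xp : 0 < Xb i j by rewrite lt_def nz Xb0.
  have hT : (Xb i j)^-1 <= T.
    rewrite /T (bigD1 i) //= (bigD1 j) //= nz -addrA lerDl.
    apply: addr_ge0; first by apply: sumr_ge0 => k _; case: ifP => // _; rewrite invr_ge0.
    by apply: sumr_ge0 => i' _; apply: sumr_ge0 => k _; case: ifP => // _; rewrite invr_ge0.
  rewrite ler_pdivrMr; last by lra.
  have : Xb i j * (Xb i j)^-1 = 1 by rewrite divff.
  nra.
have mup : 0 < 1 / (1 + T) by rewrite divr_gt0 //; lra.
split; first by lra.
split; last exact: hle.
exact: le_trans (hle _ _ nz0) (hle1 _ _).
Qed.

Lemma sqrt2_ge (R : realType) (k : nat) : (2 <= k)%N -> 141%:R / 100%:R <= Num.sqrt (k%:R : R).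
Proof.
move=> hk; apply: le_sqrt_of; first by lra.
have : (2%:R : R) <= k%:R by rewrite ler_nat.
lra.
Qed.

Lemma kappa_facts (R : realType) n r (Xb : 'M[R]_(n, r)) (Xb0 : forall i j, 0 <= Xb i j)
  (XtX : Xb^T *m Xb = 1%:M) (r0 : (0 < r)%N) : (r <= n)%N ->
  ((r < n)%N -> (1 < r)%N -> forall i : 'I_n, exists j : 'I_r, Xb i j != 0) ->
  exists m : R, 0 < m /\ m <= 1 /\
   ((1 < r)%N -> forall i, m <= Xb i (cc Xb r0 i)) /\
   0 <= kappa Xb /\ (r = 1%N -> 1 <= kappa Xb) /\
   ((1 < r)%N -> 1 + (16%:R / 5%:R / m) ^+ 2 <= (kappa Xb + 1) ^+ 2).
Proof.
move=> rn rows.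
case hnr : (n == r).
  exists 1; split; first by lra. split; first by lra.
  rewrite /kappa hnr.
  move/eqP: hnr => hnr; subst n.
  have sq0 := sqrtr_ge0 (r%:R : R).
  split; first by move=> _ i; rewrite sq_one.
  split; first by rewrite mulr_ge0 //; lra.
  split; first by move=> ->; rewrite sqrtr1; lra.
  move=> r2; have := @sqrt2_ge R r r2; nra.
case hr1 : (r == 1%N).
  exists 1; split; first by lra. split; first by lra.
  rewrite /kappa hnr hr1; move/eqP: hr1 => hr1.
  split; first by move=> h; rewrite hr1 in h.
  split; first by lra.
  split; first by lra.
  by move=> h; rewrite hr1 in h.
have r2 : (1 < r)%N by rewrite ltn_neqAle eq_sym hr1 r0.
have rn' : (r < n)%N by rewrite ltn_neqAle rn andbT eq_sym hnr.
have n0 : (0 < n)%N by apply: leq_ltn_trans rn'.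
have [j0 hj0] := rows rn' r2 (Ordinal n0).
have [mp [m1 mle]] := @mne_props R n r Xb Xb0 XtX _ _ hj0.
exists (min_nonzero_entry Xb); split => //; split => //.
split.
  move=> _ i; have [j hj] := rows rn' r2 i.
  by rewrite (@cc_eq R n r Xb Xb0 XtX r0 i j hj); exact: mle.
rewrite /kappa hnr hr1.
set mm := min_nonzero_entry Xb.
have hs := @sqrt2_ge R r r2.
have hr : (2%:R : R) <= r%:R by rewrite ler_nat.
have hnr' : (1%:R : R) <= (n - r)%:R by rewrite ler_nat subn_gt0.
have h7 : 7%:R <= 1 + 3%:R * r%:R * (n - r)%:R :> R by nra.
have hk : 20%:R / mm <= 21%:R / 10%:R * Num.sqrt r%:R * (1 + 3%:R * r%:R * (n - r)%:R) / mm.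
  rewrite ler_pM2r ?invr_gt0 //; nra.
have hk0 : 0 <= 20%:R / mm by rewrite divr_ge0 //; lra.
split; first by lra.
split; first by move=> h; rewrite h in r2.
move=> _.
set kk := 21%:R / 10%:R * Num.sqrt r%:R * (1 + 3%:R * r%:R * (n - r)%:R) / mm in hk *.
have e1 : 20%:R / mm = 20%:R * (1 / mm) by rewrite mulrA mulr1.
have e2 : 16%:R / 5%:R / mm = 16%:R / 5%:R * (1 / mm) by rewrite mulrA mulr1.
rewrite e2; rewrite e1 in hk hk0.
have i0 : 0 <= 1 / mm by rewrite divr_ge0 //; lra.
set u := 1 / mm in hk hk0 i0 *.
have h2 : (20%:R * u) ^+ 2 <= kk ^+ 2 by rewrite ler_sqr ?nnegrE //; lra.
have h3 : 0 <= kk by lra.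
have -> : (kk + 1) ^+ 2 = kk ^+ 2 + 2%:R * kk + 1 by ring.
have -> : (16%:R / 5%:R * u) ^+ 2 = 256%:R / 25%:R * u ^+ 2 by field.
have h2' : 400%:R * u ^+ 2 <= kk ^+ 2.
  by rewrite (_ : 400%:R * u ^+ 2 = (20%:R * u) ^+ 2) //; ring.
have : 0 <= u ^+ 2 by exact: sqr_ge0.
lra.
Qed.

Theorem proposition3p3 (R : realType) (n r : nat) (Xb : 'M[R]_(n, r)) :
  (1 <= r)%N -> (r <= n)%N ->
  @nonneg_stiefel R n r Xb ->
  ((r < n)%N -> (1 < r)%N -> forall i : 'I_n, exists j : 'I_r, Xb i j != 0) ->
  exists delta : R, 0 < delta /\
    forall X : 'M[R]_(n, r), frob (X - Xb) <= delta ->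
      dist X (@nonneg_stiefel R n r) <=
        (kappa Xb + 1) * (dist X (@nonneg_mx R n r) + dist X (@stiefel R n r)).
Proof.
move=> r0 rn [Xb0 XtX] rows.
have [m [m0 [m1 [hm [k0 [k1 k2]]]]]] := @kappa_facts R n r Xb Xb0 XtX r0 rn rows.
exists (m / 100%:R); split; first by rewrite divr_gt0.
move=> X hX.
set K := kappa Xb + 1.
have K1 : 1 <= K by rewrite /K; lra.
have hX' : frob (X - Xb) <= 1 / 100%:R by lra.
have hYin := @Y_in R n r Xb Xb0 XtX r0 X hX'.
set L := dist X (@nonneg_stiefel R n r).
have LY : L <= frob (X - Y Xb r0 X) := @dist_le _ _ _ X _ _ hYin.
have XbS : @nonneg_stiefel R n r Xb by split.
have LXb : L <= frob (X - Xb) := @dist_le _ _ _ X _ _ XbS.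
set e := frob (X - W X).
have e0 : 0 <= e by exact: frob_ge0.
have ed1 : e <= dist X (@nonneg_mx R n r).
  apply: (@dist_ge _ _ _ _ _ _ Xb) => // Z hZ.
  by apply: frob_le; exact: projW1.
have key : forall P, @stiefel R n r P -> L <= K * (e + frob (X - P)).
  move=> P PtP.
  have b0 : 0 <= frob (X - P) by exact: frob_ge0.
  case: (leP (frob (X - P)) (m / 100%:R)) => hP; last first.
    have : frob (X - P) <= K * (e + frob (X - P)) by nra.
    lra.
  have [hdec [hmq hr1]] := @core R n r Xb Xb0 XtX r0 X P PtP m m0 m1 hX hP hm.
  apply: le_trans LY _.
  apply: sq_le_imp; [exact: frob_ge0 | rewrite mulr_ge0 //; lra |].
  rewrite -/e in hdec hmq hr1; rewrite hdec.
  set q := frob (W X - Y Xb r0 X) in hmq hr1 *.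
  set b := frob (X - P) in hmq hr1 b0 hP *.
  have q0 : 0 <= q by exact: frob_ge0.
  have [r1|r2] := eqVneq r 1%N.
    have hq := hr1 (introT eqP r1).
    have K2 : 2%:R <= K by have := k1 r1; rewrite /K; lra.
    have he2 : e ^+ 2 <= (e + b) ^+ 2 by rewrite ler_sqr ?nnegrE //; lra.
    have hq2 : q ^+ 2 <= (e + b) ^+ 2 by rewrite ler_sqr ?nnegrE //; lra.
    have KK : 4%:R <= K ^+ 2 by nra.
    have -> : (K * (e + b)) ^+ 2 = K ^+ 2 * (e + b) ^+ 2 by ring.
    have t0 : 0 <= (e + b) ^+ 2 by exact: sqr_ge0.
    nra.
  have r2' : (1 < r)%N by rewrite ltn_neqAle eq_sym r2 r0.
  have hk := k2 r2'.
  set c := 16%:R / 5%:R / m in hk.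
  have c0 : 0 <= c by rewrite /c divr_ge0 //; lra.
  have hqc : q <= c * (e + b).
    by rewrite /c mulrAC ler_pdivlMr // mulrC.
  have hq2 : q ^+ 2 <= (c * (e + b)) ^+ 2 by rewrite ler_sqr ?nnegrE //; nra.
  have he2 : e ^+ 2 <= (e + b) ^+ 2 by rewrite ler_sqr ?nnegrE //; lra.
  have -> : (K * (e + b)) ^+ 2 = K ^+ 2 * (e + b) ^+ 2 by ring.
  have ec : (c * (e + b)) ^+ 2 = c ^+ 2 * (e + b) ^+ 2 by ring.
  rewrite ec in hq2.
  have t0 : 0 <= (e + b) ^+ 2 by exact: sqr_ge0.
  rewrite -/K in hk.
  have := ler_wpM2r t0 hk.
  rewrite mulrDl mul1r.
  lra.
have hd2 : L / K - e <= dist X (@stiefel R n r).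
  apply: (@dist_ge _ _ _ _ _ _ Xb) => // P hP.
  rewrite lerBlDl ler_pdivrMr; last by lra.
  by rewrite mulrC; exact: key.
have : L / K <= dist X (@nonneg_mx R n r) + dist X (@stiefel R n r) by lra.
rewrite ler_pdivrMr; last by lra.
by rewrite mulrC.
Qed.
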